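(* Let $\mathcal K=(AP,W,R,L,w_I)$ be a Kripke structure and let $\mathcal U_{\mathcal K}=(AP,W^\bullet,R^\bullet,L^\bullet,\varepsilon)$ be its tree-like unwinding. Then the relation $\{(w^\bullet,\mathrm{pr}(w^\bullet)) : w^\bullet\in W^\bullet\}\subseteq W^\bullet\times W$ is a cycle-bisimulation relation between $\mathcal U_{\mathcal K}$ and $\mathcal K$. Hence $\mathcal K$ and $\mathcal U_{\mathcal K}$ satisfy exactly the same CTL*$_{cd}$ state formulas (i.e., $\mathcal K\models\varphi$ iff $\mathcal U_{\mathcal K}\models\varphi$).
   Context: A Kripke structure over a finite set $AP$ of atomic propositions is a tuple $\mathcal K=(AP,W,R,L,w_I)$ where $W$ is a countable non-empty set of worlds, $w_I\in W$ is the initial world, $R\subseteq W\times W$ is a left-total transition relation (every world has at least one $R$-successor), and $L:W\to 2^{AP}$ is a labelling function. A path is an infinite sequence $\pi=\pi_0\pi_1\cdots$ of worlds with $(\pi_i,\pi_{i+1})\in R$ for all $i\in\mathbb N$; $\mathrm{Pth}(w)$ is the set of paths with $\pi_0=w$. A path $\pi$ is a cycle if for every $i\in\mathbb N$ there is $j>i$ with $\pi_j=\pi_0$ (i.e. $\pi_0$ occurs infinitely often in $\pi$); $\mathrm{Cyc}(w)$ is the set of cycles with $\pi_0=w$. Syntax of CTL*$_{cd}$: state formulas $\varphi::=p\mid\neg\varphi\mid\varphi\wedge\varphi\mid\varphi\vee\varphi\mid \mathsf E\psi\mid\mathsf A\psi\mid\mathsf E^{c}\psi\mid\mathsf A^{c}\psi$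 with $p\in AP$; path formulas $\psi::=\varphi\mid\neg\psi\mid\psi\wedge\psi\mid\psi\vee\psi\mid\mathsf X\psi\mid\psi\,\mathsf U\,\psi$. Semantics: $\mathcal K,w\models p$ iff $p\in L(w)$; Boolean connectives as usual; $\mathcal K,w\models\mathsf E\psi$ iff some $\pi\in\mathrm{Pth}(w)$ has $\mathcal K,\pi,0\models\psi$; $\mathcal K,w\models\mathsf A\psi$ iff every $\pi\in\mathrm{Pth}(w)$ has $\mathcal K,\pi,0\models\psi$; $\mathcal K,w\models\mathsf E^{c}\psi$ iff some $\pi\in\mathrm{Cyc}(w)$ has $\mathcal K,\pi,0\models\psi$; $\mathcal K,w\models\mathsf A^{c}\psi$ iff every $\pi\in\mathrm{Cyc}(w)$ has $\mathcal K,\pi,0\models\psi$. For paths: $\mathcal K,\pi,i\models\varphi$ (state formula) iff $\mathcal K,\pi_i\models\varphi$; Boolean connectives as usual; $\mathcal K,\pi,i\models\mathsf X\psi$ iff $\mathcal K,\pi,i+1\models\psi$; $\mathcal K,\pi,i\models\psi_1\mathsf U\psi_2$ iff there is $k\ge0$ with $\mathcal K,\pi,i+k\models\psi_2$ and $\mathcal K,\pi,i+j\models\psi_1$ for all $0\le j<k$. $\mathcal K\models\varphi$ iff $\mathcal K,w_I\models\varphi$. Cycle-bisimulation: for Kripke structures $\mathcal K_1=(AP,W_1,R_1,L_1,w_{I,1})$, $\mathcal K_2=(AP,W_2,R_2,L_2,w_{I,2})$, a relation $B\subseteq W_1\times W_2$ is a cycle-bisimulation relation if $(w_{I,1},w_{I,2})\in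 B$ and for all $(w_1,w_2)\in B$: (a) $L_1(w_1)=L_2(w_2)$; (b) for every $v_1$ with $(w_1,v_1)\in R_1$ there is $v_2$ with $(w_2,v_2)\in R_2$ and $(v_1,v_2)\in B$; (c) for every $v_2$ with $(w_2,v_2)\in R_2$ there is $v_1$ with $(w_1,v_1)\in R_1$ and $(v_1,v_2)\in B$; (d) for every cycle $\pi_1$ of $\mathcal K_1$ with first world $w_1$ there is a cycle $\pi_2$ of $\mathcal K_2$ with first world $w_2$ such that $((\pi_1)_i,(\pi_2)_i)\in B$ for all $i$; (e) symmetrically, for every cycle $\pi_2$ of $\mathcal K_2$ with first world $w_2$ there is a cycle $\pi_1$ of $\mathcal K_1$ with first world $w_1$ such that $((\pi_1)_i,(\pi_2)_i)\in B$ for all $i$. Tree-like unwinding: let $\mathsf{new},\mathsf{cycle}$ be two fresh constants. The projection map $\mathrm{pr}:(W\times\{\mathsf{new},\mathsf{cycle}\})^*\to W$ is given by $\mathrm{pr}(\varepsilon)=w_I$ and $\mathrm{pr}(w^\bullet)=w$ if the last letter of $w^\bullet\neq\varepsilon$ is $(w,\alpha)$. A sequence $w^\bullet$ admits $u^\bullet$ as its initial cycle state if $w^\bullet=u^\bullet\,(v_1,\mathsf{new})(v_2,\mathsf{cycle})\cdots(v_k,\mathsf{cycle})$ for some $k\ge1$ and worlds $v_1,\dots,v_k\in W$ (i.e., $u^\bullet$ is the parent of the closest ancestor-or-self of $w^\bullet$ whose last letter carries $\mathsf{new}$; every $w^\bullet\neq\varepsilon$ has exactly one, $\varepsilon$ has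 none). Define a relation $R^\bullet$ on $(W\times\{\mathsf{new},\mathsf{cycle}\})^*$: for every $w^\bullet$ and every $v$ with $(\mathrm{pr}(w^\bullet),v)\in R$: $(w^\bullet,w^\bullet(v,\mathsf{new}))\in R^\bullet$ (a forward edge); if $w^\bullet$ has initial cycle state $u^\bullet$ with $\mathrm{pr}(u^\bullet)\neq v$, then $(w^\bullet,w^\bullet(v,\mathsf{cycle}))\in R^\bullet$ (a forward edge); if $w^\bullet$ has initial cycle state $u^\bullet$ with $\mathrm{pr}(u^\bullet)=v$, then $(w^\bullet,u^\bullet)\in R^\bullet$ (a back edge); no other pairs are in $R^\bullet$. The tree-like unwinding $\mathcal U_{\mathcal K}=(AP,W^\bullet,R^\bullet,L^\bullet,\varepsilon)$ has as worlds $W^\bullet$ the sequences reachable from $\varepsilon$ via $R^\bullet$, initial world $\varepsilon$, $R^\bullet$ restricted to $W^\bullet$, and $L^\bullet(w^\bullet)=L(\mathrm{pr}(w^\bullet))$. *)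

(* Defs.v *)
From mathcomp Require Import all_boot.
Set Implicit Arguments.
Unset Strict Implicit.
Unset Printing Implicit Defensive.

Record kripke (AP : finType) := Kripke {
  kW : Type;
  kR : kW -> kW -> Prop;
  kL : kW -> {set AP};
  kI : kW
}.

Definition left_total (AP : finType) (K : kripke AP) : Prop :=
  forall w : kW K, exists v, kR w v.

Definition countable_worlds (AP : finType) (K : kripke AP) : Prop :=
  exists f : kW K -> nat, injective f.

Definition is_path (AP : finType) (K : kripke AP) (pi : nat -> kW K) : Prop :=
  forall i, kR (pi i) (pi i.+1).

Definition is_cycle (AP : finType) (K : kripke AP) (pi : nat -> kW K) : Prop :=
  is_path pi /\ forall i, exists j, i < j /\ pi j = pi 0.

Inductive sform (AP : Type) : Type :=
  | SAtom : AP -> sform AP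
  | SNot : sform AP -> sform AP
  | SAnd : sform AP -> sform AP -> sform AP
  | SOr : sform AP -> sform AP -> sform AP
  | SE : pform AP -> sform AP
  | SA : pform AP -> sform AP
  | SEc : pform AP -> sform AP
  | SAc : pform AP -> sform AP
with pform (AP : Type) : Type :=
  | PState : sform AP -> pform AP
  | PNot : pform AP -> pform AP
  | PAnd : pform AP -> pform AP -> pform AP
  | POr : pform AP -> pform AP -> pform AP
  | PX : pform AP -> pform AP
  | PU : pform AP -> pform AP -> pform AP.

Fixpoint sat_s (AP : finType) (K : kripke AP) (w : kW K) (f : sform AP) {struct f} : Prop :=
  match f with
  | SAtom p => p \in kL w
  | SNot g => ~ sat_s w g
  | SAnd g h => sat_s w g /\ sat_s w h
  | SOr g h => sat_s w g \/ sat_s w h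
  | SE q => exists pi, is_path pi /\ pi 0 = w /\ sat_p pi 0 q
  | SA q => forall pi, is_path pi -> pi 0 = w -> sat_p pi 0 q
  | SEc q => exists pi, is_cycle pi /\ pi 0 = w /\ sat_p pi 0 q
  | SAc q => forall pi, is_cycle pi -> pi 0 = w -> sat_p pi 0 q
  end
with sat_p (AP : finType) (K : kripke AP) (pi : nat -> kW K) (i : nat) (q : pform AP)
  {struct q} : Prop :=
  match q with
  | PState g => sat_s (pi i) g
  | PNot r => ~ sat_p pi i r
  | PAnd r s => sat_p pi i r /\ sat_p pi i s
  | POr r s => sat_p pi i r \/ sat_p pi i s
  | PX r => sat_p pi i.+1 r
  | PU r s => exists k, sat_p pi (i + k) s /\ forall j, j < k -> sat_p pi (i + j) r
  end.

Definition models (AP : finType) (K : kripke AP) (f : sform AP) : Prop := sat_s (kI K) f.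

Definition cycle_bisim (AP : finType) (K1 K2 : kripke AP)
  (B : kW K1 -> kW K2 -> Prop) : Prop :=
  B (kI K1) (kI K2) /\
  forall w1 w2, B w1 w2 ->
    [/\ kL w1 = kL w2,
        (forall v1, kR w1 v1 -> exists v2, kR w2 v2 /\ B v1 v2),
        (forall v2, kR w2 v2 -> exists v1, kR w1 v1 /\ B v1 v2),
        (forall pi1 : nat -> kW K1, is_cycle pi1 -> pi1 0 = w1 ->
           exists pi2 : nat -> kW K2, is_cycle pi2 /\ pi2 0 = w2 /\
             forall i, B (pi1 i) (pi2 i)) &
        (forall pi2 : nat -> kW K2, is_cycle pi2 -> pi2 0 = w2 ->
           exists pi1 : nat -> kW K1, is_cycle pi1 /\ pi1 0 = w1 /\
             forall i, B (pi1 i) (pi2 i))].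

Inductive flag := fnew | fcycle.

Section Unwinding.
Variables (AP : finType) (K : kripke AP).

Definition useq := seq (kW K * flag).

Definition pr (s : useq) : kW K := (last (kI K, fnew) s).1.

Definition all_cycle (r : useq) : bool :=
  all (fun x => if x.2 is fcycle then true else false) r.

Definition init_cycle_state (s u : useq) : Prop :=
  exists v1 rest, s = u ++ (v1, fnew) :: rest /\ all_cycle rest.

Definition Rb (s t : useq) : Prop :=
  exists v, kR (pr s) v /\
    (t = rcons s (v, fnew) \/
     (exists u, init_cycle_state s u /\ pr u <> v /\ t = rcons s (v, fcycle)) \/
     (exists u, init_cycle_state s u /\ pr u = v /\ t = u)).

Inductive reach : useq -> Prop :=
  | reach_nil : reach [::]
  | reach_step s t : reach s -> Rb s t -> reach t.

Definition Wb : Type := {s : useq | reach s}.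

Definition unwinding : kripke AP :=
  @Kripke AP Wb (fun a b => Rb (proj1_sig a) (proj1_sig b))
    (fun a => kL (pr (proj1_sig a))) (exist _ [::] reach_nil).

End Unwinding.

(* Main.v *)
From Stdlib Require Import ClassicalEpsilon ProofIrrelevance FunctionalExtensionality.
Require Import Defs.
From mathcomp Require Import all_boot.

Set Implicit Arguments.
Unset Strict Implicit.
Unset Printing Implicit Defensive.

Section Proofs.
Variables (AP : finType) (K : kripke AP).

Notation UK := (unwinding K).

Lemma pr_rcons (s : useq K) x : pr (rcons s x) = x.1.
Proof. by rewrite /pr last_rcons. Qed.

Lemma Wb_eq (x y : Wb K) : proj1_sig x = proj1_sig y -> x = y.
Proof.
case: x => x Hx; case: y => y Hy /= E; subst y; f_equal; apply proof_irrelevance.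
Qed.

Lemma Rb_pr (s t : useq K) : Rb s t -> kR (pr s) (pr t).
Proof.
move=> [v [Hv [E | [[u [_ [_ E]]] | [u [_ [Hu E]]]]]]]; subst t.
- by rewrite pr_rcons.
- by rewrite pr_rcons.
- by rewrite Hu.
Qed.

Definition prmap (pi1 : nat -> Wb K) : nat -> kW K := fun n => pr (proj1_sig (pi1 n)).

Lemma proj_path (pi1 : nat -> kW UK) : is_path pi1 -> is_path (prmap pi1).
Proof. move=> H i; apply: Rb_pr; exact: H. Qed.

Lemma proj_cycle (pi1 : nat -> kW UK) : is_cycle pi1 -> is_cycle (prmap pi1).
Proof.
move=> [Hp Hc]; split; first exact: proj_path.
move=> i; have [j [Hj E]] := Hc i; exists j; split => //.
by rewrite /prmap E.
Qed.

Section Lift.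
Variables (pi : nat -> kW K) (s : useq K).

Fixpoint lp (n : nat) : useq K :=
  match n with 0 => s | n'.+1 => rcons (lp n') (pi n, fnew) end.

Hypothesis H0 : pi 0 = pr s.

Lemma lp_pr n : pr (lp n) = pi n.
Proof. by case: n => [|n] //=; rewrite pr_rcons. Qed.

Lemma lp_Rb : is_path pi -> forall n, Rb (lp n) (lp n.+1).
Proof.
move=> Hp n; exists (pi n.+1); split; last by left.
rewrite lp_pr; exact: Hp.
Qed.

Lemma lp_reach : is_path pi -> reach s -> forall n, reach (lp n).
Proof.
move=> Hp Hs; elim=> [|n IH] //; apply: reach_step IH _; exact: lp_Rb.
Qed.

Fixpoint lc (n : nat) : useq K :=
  match n with
  | 0 => s
  | n'.+1 =>
    if size (lc n') == size s then rcons s (pi n, fnew)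
    else if excluded_middle_informative (pi n = pi 0) then s
    else rcons (lc n') (pi n, Defs.fcycle)
  end.

Lemma ics_size (t : useq K) : init_cycle_state t s -> size t != size s.
Proof.
move=> [v1 [rest [-> _]]]; rewrite size_cat /=.
rewrite addnS; apply/eqP => E.
by move: (leq_addr (size rest) (size s)); rewrite -ltnS E ltnn.
Qed.

Lemma lc_inv n : (lc n = s \/ init_cycle_state (lc n) s) /\ pr (lc n) = pi n.
Proof.
elim: n => [|n [Hi Hp]]; first by split; [left|].
rewrite /=; case: eqP => Es.
  split; last by rewrite pr_rcons.
  by right; exists (pi n.+1), [::]; rewrite cats1.
have Hc : init_cycle_state (lc n) s.
  case: Hi => // E; by rewrite E in Es.
case: excluded_middle_informative => E.
  by split; [left | rewrite -H0 E].
split; last by rewrite pr_rcons.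
right; move: Hc => [v1 [rest [Ht Ha]]].
exists v1, (rcons rest (pi n.+1, Defs.fcycle)); split.
  by rewrite Ht rcons_cat rcons_cons.
by rewrite /all_cycle all_rcons; apply/andP.
Qed.

Lemma lc_Rb : is_path pi -> forall n, Rb (lc n) (lc n.+1).
Proof.
move=> Hp n; have [Hi Hpr] := lc_inv n.
exists (pi n.+1); split; first by rewrite Hpr; exact: Hp.
rewrite /=; case: eqP => Es.
  left; case: Hi => [->//|Hc]; by move: (ics_size Hc); rewrite Es eqxx.
have Hc : init_cycle_state (lc n) s.
  case: Hi => // E; by rewrite E in Es.
case: excluded_middle_informative => E.
  by right; right; exists s; split => //; split => //; rewrite -H0 E.
right; left; exists s; split => //; split => //.
by rewrite -H0 => E'; apply: E.
Qed.

Lemma lc_reach : is_path pi -> reach s -> forall n, reach (lc n).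
Proof.
move=> Hp Hs; elim=> [|n IH] //; apply: reach_step IH _; exact: lc_Rb.
Qed.

Lemma lc_rec : is_cycle pi -> forall i, exists j, i < j /\ lc j = s.
Proof.
move=> [Hp Hc] i; have [j0 [Hj E]] := Hc i.+1.
case: j0 Hj E => [//|k] Hk E.
have Hik : i < k by [].
have [Hi _] := lc_inv k.
case: (boolP (size (lc k) == size s)) => Es.
  exists k; split => //; case: Hi => // Hc'; by move: (ics_size Hc'); rewrite Es.
exists k.+1; split; first by apply: ltnW.
rewrite /= (negbTE Es); case: excluded_middle_informative => // E'.
Qed.

End Lift.

Lemma lift_path (a : Wb K) (pi : nat -> kW K) :
  is_path pi -> pi 0 = pr (proj1_sig a) ->
  exists pi1 : nat -> kW UK, is_path pi1 /\ pi1 0 = a /\ prmap pi1 = pi.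
Proof.
move=> Hp H0.
have Hr := lp_reach H0 Hp (proj2_sig a).
exists (fun n => exist _ (lp pi (proj1_sig a) n) (Hr n)).
split; first by move=> n; exact: lp_Rb.
split; first by apply: Wb_eq.
apply: functional_extensionality => n; rewrite /prmap /=; exact: lp_pr.
Qed.

Lemma lift_cycle (a : Wb K) (pi : nat -> kW K) :
  is_cycle pi -> pi 0 = pr (proj1_sig a) ->
  exists pi1 : nat -> kW UK, is_cycle pi1 /\ pi1 0 = a /\ prmap pi1 = pi.
Proof.
move=> Hc H0; have Hp := proj1 Hc.
have Hr := lc_reach H0 Hp (proj2_sig a).
exists (fun n => exist _ (lc pi (proj1_sig a) n) (Hr n)).
split; first split.
- by move=> n; exact: lc_Rb.
- move=> i; have [j [Hj E]] := lc_rec H0 Hc i; exists j; split => //.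
  by apply: Wb_eq.
split; first by apply: Wb_eq.
apply: functional_extensionality => n; rewrite /prmap /=; exact: (proj2 (lc_inv H0 n)).
Qed.

Scheme sform_ind2 := Induction for sform Sort Prop
  with pform_ind2 := Induction for pform Sort Prop.
Combined Scheme form_ind from sform_ind2, pform_ind2.

Lemma equiv_all :
  (forall f : sform AP, forall a : Wb K,
     sat_s (pr (proj1_sig a)) f <-> @sat_s AP UK a f) /\
  (forall q : pform AP, forall (pi1 : nat -> Wb K) i,
     sat_p (prmap pi1) i q <-> @sat_p AP UK pi1 i q).
Proof.
apply: form_ind.
- by move=> p a.
- by move=> g IH a /=; rewrite IH.
- by move=> g IHg h IHh a /=; rewrite IHg IHh.
- by move=> g IHg h IHh a /=; rewrite IHg IHh.
- move=> q IH a /=; split.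
  + move=> [pi [Hp [H0 Hs]]]; have [pi1 [Hp1 [H01 E]]] := lift_path Hp H0.
    exists pi1; split => //; split => //; apply/IH; by rewrite E.
  + move=> [pi1 [Hp1 [H01 Hs]]]; exists (prmap pi1); split; first exact: proj_path.
    split; first by rewrite /prmap H01.
    by apply/IH.
- move=> q IH a /=; split.
  + move=> H pi1 Hp1 H01; apply/IH; apply: H; first exact: proj_path.
    by rewrite /prmap H01.
  + move=> H pi Hp H0; have [pi1 [Hp1 [H01 E]]] := lift_path Hp H0.
    rewrite -E; apply/IH; exact: H.
- move=> q IH a /=; split.
  + move=> [pi [Hp [H0 Hs]]]; have [pi1 [Hp1 [H01 E]]] := lift_cycle Hp H0.
    exists pi1; split => //; split => //; apply/IH; by rewrite E.
  + move=> [pi1 [Hp1 [H01 Hs]]]; exists (prmap pi1); split; first exact: proj_cycle.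
    split; first by rewrite /prmap H01.
    by apply/IH.
- move=> q IH a /=; split.
  + move=> H pi1 Hp1 H01; apply/IH; apply: H; first exact: proj_cycle.
    by rewrite /prmap H01.
  + move=> H pi Hp H0; have [pi1 [Hp1 [H01 E]]] := lift_cycle Hp H0.
    rewrite -E; apply/IH; exact: H.
- move=> g IH pi1 i /=; exact: IH.
- by move=> r IH pi1 i /=; rewrite IH.
- by move=> r IHr t IHt pi1 i /=; rewrite IHr IHt.
- by move=> r IHr t IHt pi1 i /=; rewrite IHr IHt.
- by move=> r IH pi1 i /=; rewrite IH.
- move=> r IHr t IHt pi1 i /=; split.
  + move=> [k [H1 H2]]; exists k; split; first by apply/IHt.
    by move=> j Hj; apply/IHr; apply: H2.
  + move=> [k [H1 H2]]; exists k; split; first by apply/IHt.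
    by move=> j Hj; apply/IHr; apply: H2.
Qed.

End Proofs.

Theorem mainTheorem3 (AP : finType) (K : kripke AP) :
  countable_worlds K -> left_total K ->
  cycle_bisim (K1 := unwinding K) (K2 := K)
    (fun (a : kW (unwinding K)) (w : kW K) => pr (proj1_sig a) = w) /\
  (forall phi : sform AP, models K phi <-> models (unwinding K) phi).
Proof.
move=> _ _; split; last first.
  move=> phi; exact: (proj1 (equiv_all K) phi (kI (unwinding K))).
split; first by [].
move=> w1 w2 H; subst w2; split.
- by [].
- move=> v1 Hv; exists (pr (proj1_sig v1)); split => //; exact: Rb_pr.
- move=> v2 Hv.
  have Hrb : Rb (proj1_sig w1) (rcons (proj1_sig w1) (v2, fnew)).
    by exists v2; split => //; left.
  exists (exist _ _ (reach_step (proj2_sig w1) Hrb)); split => //=.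
  by rewrite pr_rcons.
- move=> pi1 Hc H0; exists (prmap pi1); split; first exact: proj_cycle.
  by split; [rewrite /prmap H0|].
- move=> pi2 Hc H0; have [pi1 [Hc1 [H01 E]]] := lift_cycle Hc H0.
  exists pi1; split => //; split => // i; by rewrite -E.
Qed.
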